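(* Let $A=B[x;\alpha,\delta]_p$ be a Poisson polynomial algebra over a field $k$ of characteristic zero, and assume that $\alpha$ extends to a derivation $\hat\alpha$ of $A$ such that $\hat\alpha(x)=sx$ for some nonzero $s\in k$. Then for each Poisson prime ideal $Q$ of $B$, there are at most two $\hat\alpha$-stable Poisson prime ideals $P$ of $A$ with $P\cap B=Q$.
   Context: If $B$ is a Poisson algebra, $\alpha$ a Poisson derivation of $B$ (a derivation for both product and bracket) and $\delta$ a derivation of $B$ with $\delta(\{a,b\})=\{\delta(a),b\}+\{a,\delta(b)\}+\alpha(a)\delta(b)-\delta(a)\alpha(b)$ for all $a,b\in B$, then $B[x;\alpha,\delta]_p$ is the polynomial ring $B[x]$ with the unique Poisson bracket extending that of $B$ and satisfying $\{x,b\}=\alpha(b)x+\delta(b)$. A Poisson prime ideal is a prime ideal $P$ with $\{A,P\}\subseteq P$. *)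

(* Defs.v *)
From mathcomp Require Import all_boot all_algebra.
Set Implicit Arguments. Unset Strict Implicit. Unset Printing Implicit Defensive.
Import GRing.Theory.
Local Open Scope ring_scope.

(* Algebraic notions on a commutative ring R that is an algebra over a field k,
   the structure map k -> R being given explicitly by [e]
   (for B : comAlgType k, e c = c%:A ; for A = {poly B}, e c = (c%:A)%:P). *)
Section PoissonDefs.
Variables (k : fieldType) (R : comNzRingType) (e : k -> R).

Definition kderivation (d : R -> R) : Prop :=
  [/\ forall a b, d (a + b) = d a + d b,
      forall (c : k) a, d (e c * a) = e c * d a &
      forall a b, d (a * b) = d a * b + a * d b].

Definition poisson_bracket (br : R -> R -> R) : Prop :=
  [/\ forall a b c, br (a + b) c = br a c + br b c,
      forall (c : k) a b, br (e c * a) b = e c * br a b,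
      forall a b, br a b = - br b a,
      forall a b c, br a (br b c) + br b (br c a) + br c (br a b) = 0 &
      forall a b c, br a (b * c) = br a b * c + b * br a c].

Definition poisson_derivation (br : R -> R -> R) (d : R -> R) : Prop :=
  kderivation d /\ forall a b, d (br a b) = br (d a) b + br a (d b).
End PoissonDefs.

Section IdealDefs.
Variable (R : comNzRingType).

Definition ideal (P : R -> Prop) : Prop :=
  [/\ P 0, forall a b, P a -> P b -> P (a - b) & forall r a, P a -> P (r * a)].

Definition prime_ideal (P : R -> Prop) : Prop :=
  [/\ ideal P, ~ P 1 & forall a b, P (a * b) -> P a \/ P b].

Definition poisson_ideal (br : R -> R -> R) (P : R -> Prop) : Prop :=
  forall a b, P b -> P (br a b).

Definition same_set (P1 P2 : R -> Prop) : Prop := forall a, P1 a <-> P2 a.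

Definition at_most_two (S : (R -> Prop) -> Prop) : Prop :=
  forall P1 P2 P3, S P1 -> S P2 -> S P3 ->
    same_set P1 P2 \/ same_set P1 P3 \/ same_set P2 P3.
End IdealDefs.

Definition stable_poisson_prime_over (B : comNzRingType)
  (brA : {poly B} -> {poly B} -> {poly B}) (ah : {poly B} -> {poly B})
  (Q : B -> Prop) (P : {poly B} -> Prop) : Prop :=
  [/\ prime_ideal P, poisson_ideal brA P, (forall p, P p -> P (ah p)) &
      forall b : B, P b%:P <-> Q b].

(* Main.v *)
Require Import Defs.
From mathcomp Require Import all_boot all_algebra ring.
From Stdlib Require Import Classical Lia.
From mathcomp Require Import zify.
Import GRing.Theory.
Set Implicit Arguments. Unset Strict Implicit. Unset Printing Implicit Defensive.
Local Open Scope ring_scope.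

Section IdealFacts.
Variable R : comNzRingType.
Variable I : R -> Prop.
Hypothesis HI : ideal I.

Lemma id0 : I 0. Proof. by case: HI. Qed.
Lemma idB a b : I a -> I b -> I (a - b). Proof. by case: HI => _ H _; apply: H. Qed.
Lemma idMl r a : I a -> I (r * a). Proof. by case: HI => _ _ H; apply: H. Qed.
Lemma idMr r a : I a -> I (a * r). Proof. by rewrite mulrC; apply: idMl. Qed.
Lemma idN a : I a -> I (- a).
Proof. by move=> Ha; rewrite -sub0r; apply: idB => //; apply: id0. Qed.
Lemma idD a b : I a -> I b -> I (a + b).
Proof. by move=> Ha Hb; rewrite -[b]opprK; apply: idB => //; apply: idN. Qed.
Lemma id_eq a b : a = b -> I a -> I b. Proof. by move=> ->. Qed.
Lemma idsum (J : Type) (r : seq J) (F : J -> R) :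
  (forall j, I (F j)) -> I (\sum_(j <- r) F j).
Proof. by move=> H; apply: big_ind => //; [apply: id0 | apply: idD]. Qed.
Lemma idBr a b : I a -> I (a - b) -> I b.
Proof. by move=> Ha Hab; have := idB Ha Hab; rewrite opprB addrC subrK. Qed.
End IdealFacts.

Lemma primeM (R : comNzRingType) (I : R -> Prop) : prime_ideal I ->
  forall a b, ~ I a -> ~ I b -> ~ I (a * b).
Proof. by case=> _ _ H a b Ha Hb /H []. Qed.

Lemma primeX (R : comNzRingType) (I : R -> Prop) : prime_ideal I ->
  forall a n, ~ I a -> ~ I (a ^+ n).
Proof.
move=> HP a n Ha; elim: n => [|n IH]; first by rewrite expr0; case: HP.
by rewrite exprS; apply: primeM.
Qed.

Section Main.
Variables (k : fieldType) (B : comAlgType k).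
Variables (brB : B -> B -> B) (alpha delta : B -> B)
  (brA : {poly B} -> {poly B} -> {poly B}) (ah : {poly B} -> {poly B}) (s : k).
Hypothesis char0 : [pchar k] =i pred0.
Hypothesis HbrB : poisson_bracket (fun c : k => c%:A : B) brB.
Hypothesis Halpha : poisson_derivation (fun c : k => c%:A : B) brB alpha.
Hypothesis HbrA : poisson_bracket (fun c : k => (c%:A : B)%:P) brA.
Hypothesis HbrAC : forall a b : B, brA a%:P b%:P = (brB a b)%:P.
Hypothesis HbrAX : forall b : B, brA 'X b%:P = (alpha b)%:P * 'X + (delta b)%:P.
Hypothesis Hah : kderivation (fun c : k => (c%:A : B)%:P) ah.
Hypothesis HahC : forall b : B, ah b%:P = (alpha b)%:P.
Hypothesis s0 : s != 0.
Hypothesis HahX : ah 'X = (s%:A : B)%:P * 'X.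
Variable Q : B -> Prop.
Hypothesis Qprime : prime_ideal Q.

Lemma Qid : ideal Q. Proof. by case: Qprime. Qed.
Lemma Q1 : ~ Q 1. Proof. by case: Qprime. Qed.

Lemma natk_neq0 n : (0 < n)%N -> (n%:R : k) != 0.
Proof. by move=> Hn; have /pcharf0P -> := char0; rewrite -lt0n. Qed.

Lemma natB_alg n : (n%:R : k)%:A = (n%:R : B).
Proof. by rewrite scaler_nat. Qed.

Lemma Q_unit (e : k) z : e != 0 -> Q (e%:A * z) -> Q z.
Proof.
move=> He Hz; have := idMl Qid (e^-1)%:A Hz.
by rewrite !mulr_algl scalerA mulVf // scale1r.
Qed.

Lemma brBD a b c : brB (a + b) c = brB a c + brB b c. Proof. by case: HbrB. Qed.
Lemma brBN a b : brB a b = - brB b a. Proof. by case: HbrB. Qed.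
Lemma brBM2 a b c : brB a (b * c) = brB a b * c + b * brB a c. Proof. by case: HbrB. Qed.
Lemma brBM1 a b c : brB (a * b) c = brB a c * b + a * brB b c.
Proof. by rewrite brBN brBM2 [brB c a]brBN [brB c b]brBN; ring. Qed.
Lemma brB0 b : brB 0 b = 0.
Proof. by apply: (addrI (brB 0 b)); rewrite -brBD !addr0. Qed.
Lemma brBxx a : brB a a = 0.
Proof.
have H : (2%:R : k)%:A * brB a a = 0.
  by rewrite natB_alg mulr2n mulrDl mul1r {1}brBN addNr.
have h2 := natk_neq0 (isT : (0 < 2)%N).
have : (2%:R^-1 : k)%:A * ((2%:R : k)%:A * brB a a) = 0 by rewrite H mulr0.
by rewrite !mulr_algl scalerA mulVf // scale1r.
Qed.

Lemma alphaD a b : alpha (a + b) = alpha a + alpha b. Proof. by case: Halpha => [[]]. Qed.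
Lemma alphaM a b : alpha (a * b) = alpha a * b + a * alpha b. Proof. by case: Halpha => [[]]. Qed.
Lemma alpha0 : alpha 0 = 0.
Proof. by apply: (addrI (alpha 0)); rewrite -alphaD !addr0. Qed.
Lemma alphaN a : alpha (- a) = - alpha a.
Proof. by apply: (addrI (alpha a)); rewrite -alphaD !subrr alpha0. Qed.
Lemma alphaB a b : alpha (a - b) = alpha a - alpha b. Proof. by rewrite alphaD alphaN. Qed.
Lemma alpha1 : alpha 1 = 0.
Proof.
have H := alphaM 1 1; rewrite !mulr1 mul1r in H.
by apply: (addrI (alpha 1)); rewrite addr0 -H.
Qed.
Lemma alphan n : alpha n%:R = 0.
Proof. elim: n => [|n IH]; first by rewrite alpha0. by rewrite mulrS alphaD alpha1 IH addr0. Qed.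

Lemma ahD a b : ah (a + b) = ah a + ah b. Proof. by case: Hah. Qed.
Lemma ahM a b : ah (a * b) = ah a * b + a * ah b. Proof. by case: Hah. Qed.
Lemma ah0 : ah 0 = 0.
Proof. by apply: (addrI (ah 0)); rewrite -ahD !addr0. Qed.
Lemma ahN a : ah (- a) = - ah a.
Proof. by apply: (addrI (ah a)); rewrite -ahD !subrr ah0. Qed.
Lemma ahB a b : ah (a - b) = ah a - ah b. Proof. by rewrite ahD ahN. Qed.

Lemma brAD a b c : brA (a + b) c = brA a c + brA b c. Proof. by case: HbrA. Qed.
Lemma brAN a b : brA a b = - brA b a. Proof. by case: HbrA. Qed.
Lemma brAM2 a b c : brA a (b * c) = brA a b * c + b * brA a c. Proof. by case: HbrA. Qed.
Lemma brAM1 a b c : brA (a * b) c = brA a c * b + a * brA b c.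
Proof. by rewrite brAN brAM2 [brA c a]brAN [brA c b]brAN; ring. Qed.
Lemma brA0 c : brA 0 c = 0.
Proof. by apply: (addrI (brA 0 c)); rewrite -brAD !addr0. Qed.
Lemma brANl a c : brA (- a) c = - brA a c.
Proof. by apply: (addrI (brA a c)); rewrite -brAD !subrr brA0. Qed.
Lemma brABl a b c : brA (a - b) c = brA a c - brA b c. Proof. by rewrite brAD brANl. Qed.

Lemma ah_coef g i : (ah g)`_i = alpha g`_i + s%:A * i%:R * g`_i.
Proof.
elim/poly_ind: g i => [|p c IH] i.
  by rewrite ah0 !coef0 alpha0; ring.
rewrite ahD ahM HahX HahC mulrA !coefD !coefMX coefMC !coefC.
case: i => [|i] /=.
  by rewrite !add0r; ring.
rewrite !addr0; have := IH i => ->. rewrite -[i.+1]addn1 natrD; ring.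
Qed.

Lemma br_coef g b i : (brA g b%:P)`_i =
  brB g`_i b + alpha b * i%:R * g`_i + delta b * i.+1%:R * g`_i.+1.
Proof.
elim/poly_ind: g i => [|p c IH] i.
  by rewrite brA0 !coef0 brB0; ring.
rewrite brAD brAM1 HbrAX HbrAC mulrDr mulrA !coefD !coefMX !coefMC !coefC.
case: i => [|i] /=.
  by rewrite !add0r !addr0; ring.
rewrite !addr0; have := IH i => ->.
rewrite -[i.+2]addn1 -[i.+1]addn1 !natrD; ring.
Qed.

Lemma brBNl a c : brB (- a) c = - brB a c.
Proof. by apply: (addrI (brB a c)); rewrite -brBD !subrr brB0. Qed.
Lemma brBB a b c : brB (a - b) c = brB a c - brB b c. Proof. by rewrite brBD brBNl. Qed.

Definition QA (g : {poly B}) := forall i, Q g`_i.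

Lemma QAid : ideal QA.
Proof.
split.
- by move=> i; rewrite coef0; apply: id0 Qid.
- by move=> a b Ha Hb i; rewrite coefB; exact: (idB Qid (Ha i) (Hb i)).
- move=> r a Ha i; rewrite coefM; apply: big_ind => //.
  + exact: id0 Qid.
  + move=> x y Hx Hy; exact (idD Qid Hx Hy).
  + move=> j _; exact (idMl Qid _ (Ha _)).
Qed.

Section OneP.
Variable P : {poly B} -> Prop.
Hypothesis HP : stable_poisson_prime_over brA ah Q P.

Lemma Pprime : prime_ideal P. Proof. by case: HP. Qed.
Lemma Pid : ideal P. Proof. by case: HP => [[]]. Qed.
Lemma Pah g : P g -> P (ah g). Proof. by case: HP => _ _ H _; apply: H. Qed.
Lemma Pbr a g : P g -> P (brA a g). Proof. by case: HP => _ H _ _; apply: H. Qed.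
Lemma PbrR g a : P g -> P (brA g a).
Proof. by move=> Hg; rewrite brAN; apply (idN Pid); apply Pbr. Qed.
Lemma PC b : P b%:P <-> Q b. Proof. by case: HP => _ _ _ H; apply: H. Qed.
Lemma PCQ b : Q b -> P b%:P. Proof. by move/PC. Qed.
Lemma PCP b : P b%:P -> Q b. Proof. by move/PC. Qed.

Lemma QA_P g : QA g -> P g.
Proof.
move=> Hg; rewrite -[g]coefK poly_def; apply: big_ind => //.
- exact: id0 Pid.
- move=> x y Hx Hy; exact (idD Pid Hx Hy).
- move=> i _; rewrite -mul_polyC; apply (idMr Pid); apply PCQ; apply Hg.
Qed.

Lemma lin_rel c d : P (c%:P * 'X + d%:P) ->
  Q (c * alpha d - alpha c * d - s%:A * c * d) /\
  forall b, Q (c * c * delta b + c * brB d b - brB c b * d - alpha b * c * d).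
Proof.
move=> Hh; split.
  apply PCP; apply (id_eq (I := P) (a := c%:P * ah (c%:P * 'X + d%:P)
       - (alpha c + s%:A * c)%:P * (c%:P * 'X + d%:P))).
    rewrite ahD ahM !HahC HahX.
    by rewrite !(rmorphB, rmorphD, rmorphM) /=; ring.
  apply (idB Pid); apply (idMl Pid); [apply Pah |]; exact Hh.
move=> b; apply PCP; apply (id_eq (I := P) (a := c%:P * brA (c%:P * 'X + d%:P) b%:P
       - (brB c b + alpha b * c)%:P * (c%:P * 'X + d%:P))).
  rewrite brAD brAM1 !HbrAC HbrAX.
  by rewrite !(rmorphB, rmorphD, rmorphM) /=; ring.
apply (idB Pid); apply (idMl Pid); [apply PbrR |]; exact Hh.
Qed.

End OneP.

Lemma lead_lin (c d : B) : c != 0 -> size (c%:P * 'X + d%:P) = 2%N /\ lead_coef (c%:P * 'X + d%:P) = c.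
Proof.
move=> Hc; have Hs : size (c%:P * 'X + d%:P) = 2%N.
  by rewrite size_MXaddC polyC_eq0 (negbTE Hc) /= size_polyC Hc.
split => //; rewrite lead_coefE Hs /= coefD coefMX coefC /= coefC /=.
by rewrite addr0.
Qed.

Lemma Qnz c : ~ Q c -> c != 0.
Proof. by move=> Hc; apply/eqP => H; apply: Hc; rewrite H; apply (id0 Qid). Qed.

Lemma uniq_sub P P' c d c' d' :
  stable_poisson_prime_over brA ah Q P -> stable_poisson_prime_over brA ah Q P' ->
  ~ Q c -> ~ Q c' -> P (c%:P * 'X + d%:P) -> P' (c'%:P * 'X + d'%:P) ->
  forall g, P g -> P' g.
Proof.
move=> HP HP' Hc Hc' Hh Hh'.
have [E1 E2] := lin_rel HP Hh.
have [E1' E2'] := lin_rel HP' Hh'.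
pose e := d * c' - c * d'. pose m := c * c'.
have Rb : forall b, Q (m * brB e b - e * brB m b - alpha b * e * m).
  move=> b; apply (id_eq (I := Q) (a :=
     c' ^+ 2 * (c * c * delta b + c * brB d b - brB c b * d - alpha b * c * d)
   - c ^+ 2 * (c' * c' * delta b + c' * brB d' b - brB c' b * d' - alpha b * c' * d'))).
    by rewrite /e /m brBB !brBM1; ring.
  by apply (idB Qid); apply (idMl Qid); [apply E2 | apply E2'].
have HA : Q (m * alpha e - e * alpha m - s%:A * m * e).
  apply (id_eq (I := Q) (a :=
     c' ^+ 2 * (c * alpha d - alpha c * d - s%:A * c * d)
   - c ^+ 2 * (c' * alpha d' - alpha c' * d' - s%:A * c' * d'))).
    by rewrite /e /m alphaB !alphaM; ring.
  by apply (idB Qid); apply (idMl Qid); [apply E1 | apply E1'].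
have Hfin : Q (s%:A * (e * m) ^+ 2).
  apply (id_eq (I := Q) (a := - (m * (m * brB e e - e * brB m e - alpha e * e * m)
        - e * (m * brB e m - e * brB m m - alpha m * e * m)) - e * m *
        (m * alpha e - e * alpha m - s%:A * m * e))).
    by rewrite !brBxx [brB m e]brBN; ring.
  apply (idB Qid); last by apply (idMl Qid).
  by apply (idN Qid); apply (idB Qid); apply (idMl Qid).
have Qe : Q e.
  have H2 := Q_unit s0 Hfin.
  case: Qprime => _ _ Hpr.
  rewrite expr2 in H2.
  have [H3|H3] := Hpr _ _ H2; case: (Hpr _ _ H3) => // Hm; exfalso;
    by apply: (primeM Qprime Hc Hc').
have Ph' : P' (c%:P * 'X + d%:P).
  have H1 : P' (c'%:P * (c%:P * 'X + d%:P)).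
    apply (id_eq (I := P') (a := e%:P + c%:P * (c'%:P * 'X + d'%:P))).
      by rewrite /e !(rmorphB, rmorphD, rmorphM) /=; ring.
    apply (idD (Pid HP')); [apply (PCQ HP'); exact Qe | apply (idMl (Pid HP')); exact Hh'].
  case: (Pprime HP') => _ _ Hpr.
  case: (Hpr _ _ H1) => // /(PCP HP') //.
move=> g Hg.
have [Hs Hl] := lead_lin d (Qnz Hc).
have := Pdiv.ComRing.rdivp_eq (c%:P * 'X + d%:P) g.
set q := Pdiv.Ring.rdivp _ _; set r := Pdiv.Ring.rmodp _ _; set K := Pdiv.Ring.rscalp _ _.
move=> Heq; rewrite Hl in Heq.
have Hr : (size r <= 1)%N.
  have Hh0 : (c%:P * 'X + d%:P) != 0 by rewrite -size_poly_eq0 Hs.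
  by have := Pdiv.CommonRing.ltn_rmodp g (c%:P * 'X + d%:P); rewrite Hs Hh0.
have Hr0 : r = (r`_0)%:P by apply: size1_polyC.
have Pr : P r.
  apply (id_eq (I := P) (a := (c ^+ K)%:P * g - q * (c%:P * 'X + d%:P))).
    by rewrite mul_polyC Heq; ring.
  apply (idB (Pid HP)); apply (idMl (Pid HP)); assumption.
have P'r : P' r.
  rewrite Hr0; apply (PCQ HP'); apply (PCP HP); rewrite -Hr0; exact Pr.
have P'cg : P' ((c ^+ K)%:P * g).
  apply (id_eq (I := P') (a := q * (c%:P * 'X + d%:P) + r)).
    by rewrite -Heq mul_polyC.
  apply (idD (Pid HP')); [apply (idMl (Pid HP')); exact Ph' | exact P'r].
case: (Pprime HP') => _ _ Hpr.
case: (Hpr _ _ P'cg) => // /(PCP HP') H.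
by exfalso; exact (primeX Qprime Hc H).
Qed.


Section Weights.
Variable c : B.

Definition Wt (G : {poly B}) (m t : nat) :=
  QA (c%:P * ah G - (m%:R * alpha c + t%:R * s%:A * c)%:P * G) /\
  forall b, QA (c%:P * brA G b%:P - (m%:R * brB c b + t%:R * alpha b * c)%:P * G).

Lemma QA_eq a b : a = b -> QA a -> QA b. Proof. by move=> ->. Qed.

Lemma Wt_mul G1 G2 m1 t1 m2 t2 : Wt G1 m1 t1 -> Wt G2 m2 t2 ->
  Wt (G1 * G2) (m1 + m2) (t1 + t2).
Proof.
move=> [A1 B1] [A2 B2]; split.
  apply (QA_eq (a := (c%:P * ah G1 - (m1%:R * alpha c + t1%:R * s%:A * c)%:P * G1) * G2
     + G1 * (c%:P * ah G2 - (m2%:R * alpha c + t2%:R * s%:A * c)%:P * G2))).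
    by rewrite ahM !natrD !(rmorphB, rmorphD, rmorphM) /=; ring.
  by apply (idD QAid); [apply (idMr QAid) | apply (idMl QAid)].
move=> b.
apply (QA_eq (a := (c%:P * brA G1 b%:P - (m1%:R * brB c b + t1%:R * alpha b * c)%:P * G1) * G2
     + G1 * (c%:P * brA G2 b%:P - (m2%:R * brB c b + t2%:R * alpha b * c)%:P * G2))).
  by rewrite brAM1 !natrD !(rmorphB, rmorphD, rmorphM) /=; ring.
by apply (idD QAid); [apply (idMr QAid) | apply (idMl QAid)].
Qed.

Lemma Wt_sub G1 G2 m t : Wt G1 m t -> Wt G2 m t -> Wt (G1 - G2) m t.
Proof.
move=> [A1 B1] [A2 B2]; split.
  apply (QA_eq (a := (c%:P * ah G1 - (m%:R * alpha c + t%:R * s%:A * c)%:P * G1)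
     - (c%:P * ah G2 - (m%:R * alpha c + t%:R * s%:A * c)%:P * G2))).
    by rewrite ahB; ring.
  by apply (idB QAid).
move=> b.
apply (QA_eq (a := (c%:P * brA G1 b%:P - (m%:R * brB c b + t%:R * alpha b * c)%:P * G1)
     - (c%:P * brA G2 b%:P - (m%:R * brB c b + t%:R * alpha b * c)%:P * G2))).
  by rewrite brABl; ring.
by apply (idB QAid).
Qed.

Lemma QA0 : QA 0. Proof. exact (id0 QAid). Qed.

Lemma brBn n b : brB n%:R b = 0.
Proof.
elim: n => [|n IH]; first by rewrite brB0.
have H1 : brB 1 b = 0.
  have H := brBM1 1 1 b; rewrite !mulr1 mul1r in H.
  by apply: (addrI (brB 1 b)); rewrite addr0 -H.
by rewrite mulrS brBD H1 IH addr0.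
Qed.

Lemma Wt_const e : alpha e = 0 -> (forall b, brB e b = 0) -> Wt e%:P 0 0.
Proof.
move=> He Hb; split.
  by apply (QA_eq (a := 0)); [rewrite HahC He; ring | exact QA0].
move=> b; apply (QA_eq (a := 0)); [rewrite HbrAC Hb; ring | exact QA0].
Qed.

Lemma Wt_c : Wt c%:P 1 0.
Proof.
split.
  by apply (QA_eq (a := 0)); [rewrite HahC !(rmorphB, rmorphD, rmorphM) /=; ring | exact QA0].
move=> b; apply (QA_eq (a := 0)); [rewrite HbrAC !(rmorphB, rmorphD, rmorphM) /=; ring | exact QA0].
Qed.

Lemma Wt_exp G m t j : Wt G m t -> Wt (G ^+ j) (j * m) (j * t).
Proof.
move=> HG; elim: j => [|j IH].
  rewrite expr0 !mul0n -[1]/(1%:P); apply: Wt_const; first exact: alpha1.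
  by move=> b; apply: (brBn 1).
rewrite exprS !mulSn; exact: Wt_mul.
Qed.

End Weights.

Lemma coef_mulL (p : {poly B}) (a d : B) j :
  (p * (a%:P * 'X + d%:P))`_j = (if j == 0%N then 0 else p`_(j.-1) * a) + p`_j * d.
Proof. by rewrite mulrDr mulrA coefD coefMX coefMC coefMC. Qed.

Lemma linpow (a d : B) m : (forall j, (m < j)%N -> ((a%:P * 'X + d%:P) ^+ m)`_j = 0) /\
   ((a%:P * 'X + d%:P) ^+ m)`_m = a ^+ m.
Proof.
elim: m => [|m [IH1 IH2]].
  split; last by rewrite !expr0 coefC.
  by move=> [|j] //= _; rewrite expr0 coefC.
split.
  move=> [|j] // Hj; rewrite exprSr coef_mulL /= IH1 ?IH1 //; first by ring.
  by apply: ltn_trans Hj.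
by rewrite exprSr coef_mulL /= IH2 IH1 // exprSr; ring.
Qed.

Lemma desc_step c G n j : ~ Q c -> Wt c G n n -> (j < n)%N -> Q G`_j.+1 -> Q G`_j.
Proof.
move=> Hc [HA HB] Hjn Hg1.
pose z := G`_j; pose g1 := G`_j.+1.
have Ea : Q (c * (alpha z + s%:A * j%:R * z) - (n%:R * alpha c + n%:R * s%:A * c) * z).
  by have := HA j; rewrite coefB !coefCM ah_coef.
have Eb : forall b, Q (c * (brB z b + alpha b * j%:R * z + delta b * j.+1%:R * g1)
            - (n%:R * brB c b + n%:R * alpha b * c) * z).
  by move=> b; have := HB b j; rewrite coefB !coefCM br_coef.
pose K := n%:R - j%:R : B.
have HT : Q (s%:A * (K * (K * (c * z) ^+ 2))).
  apply (id_eq (I := Q) (a :=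
     - c * (c * (brB z z + alpha z * j%:R * z + delta z * j.+1%:R * g1)
            - (n%:R * brB c z + n%:R * alpha z * c) * z)
     + (c * c * delta z * j.+1%:R) * g1
     - (K * c * z) * (c * (alpha z + s%:A * j%:R * z) - (n%:R * alpha c + n%:R * s%:A * c) * z)
     + (n%:R * z) * (c * (brB z c + alpha c * j%:R * z + delta c * j.+1%:R * g1)
            - (n%:R * brB c c + n%:R * alpha c * c) * z)
     - (n%:R * z * c * delta c * j.+1%:R) * g1)).
    by rewrite !brBxx [brB c z]brBN /K; ring.
  apply (idB Qid); last by apply (idMl Qid); exact Hg1.
  apply (idD Qid); last by apply (idMl Qid); apply Eb.
  apply (idB Qid); last by apply (idMl Qid); exact Ea.
  apply (idD Qid); last by apply (idMl Qid); exact Hg1.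
  by apply (idMl Qid); apply Eb.
have HK : K = ((n - j)%:R : k)%:A by rewrite natB_alg /K natrB // ltnW.
have HK0 : ((n - j)%:R : k) != 0 by apply: natk_neq0; rewrite subn_gt0.
have H2 := Q_unit s0 HT; rewrite HK in H2.
have H3 := Q_unit HK0 (Q_unit HK0 H2).
case: Qprime => _ _ Hpr; rewrite expr2 in H3.
by case: (Hpr _ _ H3) => /Hpr [] // /Hc.
Qed.

Lemma desc c G n : ~ Q c -> Wt c G n n -> (forall j, (n <= j)%N -> G`_j = 0) -> QA G.
Proof.
move=> Hc HW Hz.
have H : forall i, Q G`_(n - i).
  elim=> [|i IH]; first by rewrite subn0 Hz //; apply (id0 Qid).
  case: (leqP n i) => Hni.
    by have -> : (n - i.+1 = n - i)%N by lia.
  apply: (desc_step Hc HW); first by lia.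
  by have -> : ((n - i.+1).+1 = n - i)%N by lia.
move=> j; case: (leqP n j) => Hj.
  by rewrite Hz //; apply (id0 Qid).
by have -> : j = (n - (n - j))%N by lia.
Qed.

Lemma Wt_cast c G m t m' t' : Wt c G m t -> m = m' -> t = t' -> Wt c G m' t'.
Proof. by move=> H <- <-. Qed.

Lemma QA_C x : Q x -> QA x%:P.
Proof. by move=> Hx i; rewrite coefC; case: (i == 0%N) => //; apply (id0 Qid). Qed.

Section OneP2.
Variable P : {poly B} -> Prop.
Hypothesis HP : stable_poisson_prime_over brA ah Q P.

Lemma minimal_elt : (exists g, P g /\ ~ QA g) ->
  exists f, P f /\ ~ Q (lead_coef f) /\ (forall g, P g -> (size g < size f)%N -> QA g).
Proof.
move=> [g0 [Pg0 NQ0]].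
suff H : forall N (g : {poly B}), (size g <= N)%N -> P g -> ~ QA g -> exists f : {poly B}, P f /\ ~ Q (lead_coef f) /\
   (forall g : {poly B}, P g -> (size g < size f)%N -> QA g) by exact: (H _ g0 (leqnn _)).
elim=> [|N IH] g Hs Pg NQ.
  by exfalso; apply: NQ; move/size_poly_leq0P: Hs => ->; exact QA0.
case: (classic (exists g', P g' /\ ~ QA g' /\ (size g' < size g)%N)).
  move=> [g' [Pg' [NQ' Hs']]]; apply: (IH g') => //.
  by rewrite -ltnS; exact: leq_trans Hs' Hs.
move=> Hno.
have Hmin : forall g', P g' -> (size g' < size g)%N -> QA g'.
  move=> g' Pg' Hs'; apply: NNPP => NQ'; apply: Hno; by exists g'.
exists g; split => //; split => // Hl.
have Hg0 : (0 < size g)%N.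
  rewrite lt0n size_poly_eq0; apply/eqP => Hg; apply: NQ; rewrite Hg; exact QA0.
pose g' := g - (lead_coef g)%:P * 'X^((size g).-1).
have Pg' : P g'.
  apply (idB (Pid HP)) => //; apply (idMr (Pid HP)); apply (PCQ HP); exact Hl.
have Hs' : (size g' < size g)%N.
  rewrite -(prednK Hg0) ltnS; apply/leq_sizeP => j Hj.
  rewrite /g' coefB coefCM coefXn.
  case: (eqVneq j (size g).-1) => [->|Hne].
    by rewrite /= mulr1 lead_coefE subrr.
  rewrite /= mulr0 subr0; apply/leq_sizeP; last exact: leqnn.
  by rewrite -(prednK Hg0); move: Hj Hne; rewrite leq_eqVlt eq_sym => /orP [->|] //.
have Q' := Hmin g' Pg' Hs'.
apply: NQ => i.
have := Q' i; rewrite /g' coefB coefCM coefXn => H.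
have := idD Qid H (idMr Qid (i == (size g).-1)%:R Hl).
by rewrite mulrC subrK.
Qed.
End OneP2.

Lemma Pexp (P : {poly B} -> Prop) : prime_ideal P -> forall x m, P (x ^+ m) -> P x.
Proof.
move=> [HPi H1 Hpr] x; elim=> [|m IH]; first by rewrite expr0.
by rewrite exprS => /Hpr [].
Qed.

Section OneP3.
Variable P : {poly B} -> Prop.
Hypothesis HP : stable_poisson_prime_over brA ah Q P.

Lemma exists_lin : (exists g, P g /\ ~ QA g) ->
  exists c0 d0, ~ Q c0 /\ P (c0%:P * 'X + d0%:P).
Proof.
move=> Hex.
have [f [Pf [Hc Hmin]]] := minimal_elt HP Hex.
set c := lead_coef f in Hc.
case Hsf: (size f) => [|[|n']].
- by exfalso; apply: Hc; rewrite /c lead_coefE Hsf; rewrite nth_default ?Hsf //; apply (id0 Qid).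
- exfalso; apply: Hc; apply (PCP HP).
  have Hf1 : (size f <= 1)%N by rewrite Hsf.
  by rewrite /c lead_coefE Hsf /= -(size1_polyC Hf1).
set n := n'.+1.
have Hfn : f`_n = c by rewrite /c lead_coefE Hsf.
have Hfz : forall j, (n < j)%N -> f`_j = 0.
  by move=> j Hj; rewrite nth_default // Hsf.
have Hnn : (n%:R : B) = n'%:R + 1 by rewrite /n -addn1 natrD.
have R1 : QA (c%:P * ah f - (1%:R * alpha c + n%:R * s%:A * c)%:P * f).
  apply: Hmin.
    apply (idB (Pid HP)); apply (idMl (Pid HP)); [apply (Pah HP) |]; exact Pf.
  rewrite Hsf ltnS; apply/leq_sizeP => j Hj.
  rewrite coefB !coefCM ah_coef.
  move: Hj; rewrite leq_eqVlt => /orP [/eqP <-|Hj].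
    by rewrite Hfn /n; ring.
  by rewrite Hfz // alpha0; ring.
have R2 : forall b, QA (c%:P * brA f b%:P - (1%:R * brB c b + n%:R * alpha b * c)%:P * f).
  move=> b; apply: Hmin.
    apply (idB (Pid HP)); apply (idMl (Pid HP)); [apply (PbrR HP) |]; exact Pf.
  rewrite Hsf ltnS; apply/leq_sizeP => j Hj.
  rewrite coefB !coefCM br_coef (Hfz j.+1) ?ltnS //.
  move: Hj; rewrite leq_eqVlt => /orP [/eqP <-|Hj].
    by rewrite Hfn /n; ring.
  by rewrite Hfz // brB0; ring.
have Wf : Wt c f 1 n by split.
pose d0 := f`_n'.
pose h := (n%:R * c)%:P * 'X + d0%:P.
have Wh : Wt c h 1 1.
  split.
    apply (QA_eq (a := ((c%:P * ah f - (1%:R * alpha c + n%:R * s%:A * c)%:P * f)`_n')%:P)).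
      rewrite coefB !coefCM ah_coef /h ahD ahM !HahC HahX alphaM alphan.
      by rewrite !(rmorphB, rmorphD, rmorphM) /= Hnn !(rmorphB, rmorphD, rmorphM) /=; ring.
    by apply: QA_C; apply: R1.
  move=> b.
  apply (QA_eq (a := ((c%:P * brA f b%:P - (1%:R * brB c b + n%:R * alpha b * c)%:P * f)`_n')%:P)).
    rewrite coefB !coefCM br_coef -/n Hfn /h brAD brAM1 !HbrAC HbrAX brBM1 brBn.
    by rewrite !(rmorphB, rmorphD, rmorphM) /= Hnn !(rmorphB, rmorphD, rmorphM) /=; ring.
  by apply: QA_C; apply: R2.
pose N : B := n%:R ^+ n.
pose G := (N * c ^+ n')%:P * f - h ^+ n.
have WG : Wt c G n n.
  apply: Wt_sub; last first.
    by apply: (Wt_cast (Wt_exp n Wh)); rewrite muln1.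
  rewrite rmorphM rmorphXn /=.
  have W1 : Wt c N%:P 0 0.
    apply: Wt_const; first by rewrite /N -natrX alphan.
    by move=> b; rewrite /N -natrX brBn.
  have W3 := Wt_mul (Wt_mul W1 (Wt_exp n' (Wt_c c))) Wf.
  apply: (Wt_cast W3); rewrite /n; lia.
have GQ : QA G.
  apply: (desc Hc WG) => j; rewrite leq_eqVlt => /orP [/eqP <-|Hj].
    have [_ H2] := linpow (n%:R * c) d0 n.
    rewrite /G coefB coefCM Hfn H2 /N exprMn /n !exprS; ring.
  have [H1 _] := linpow (n%:R * c) d0 n.
  by rewrite /G coefB coefCM Hfz // H1 // mulr0 subr0.
have PG := QA_P HP GQ.
have Ph : P h.
  apply: (Pexp (Pprime HP) (m := n)).
  apply (idBr (Pid HP) (a := (N * c ^+ n')%:P * f)); first by apply (idMl (Pid HP)).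
  exact PG.
exists (n%:R * c), d0; split => //.
rewrite -natB_alg => H; apply: Hc; apply: (Q_unit _ H).
exact: natk_neq0.
Qed.
End OneP3.

Lemma main_thm : at_most_two (stable_poisson_prime_over brA ah Q).
Proof.
have same : forall P P', stable_poisson_prime_over brA ah Q P ->
    stable_poisson_prime_over brA ah Q P' ->
    (exists g, P g /\ ~ QA g) -> (exists g, P' g /\ ~ QA g) -> same_set P P'.
  move=> P P' HP HP' E E'.
  have [c [d [Hc Hh]]] := exists_lin HP E.
  have [c' [d' [Hc' Hh']]] := exists_lin HP' E'.
  move=> g; split; [exact: (uniq_sub HP HP' Hc Hc' Hh Hh') | exact: (uniq_sub HP' HP Hc' Hc Hh' Hh)].
have triv : forall P P', stable_poisson_prime_over brA ah Q P ->
    stable_poisson_prime_over brA ah Q P' ->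
    ~ (exists g, P g /\ ~ QA g) -> ~ (exists g, P' g /\ ~ QA g) -> same_set P P'.
  move=> P P' HP HP' E E' g; split => Hg.
    apply: (QA_P HP'); apply: NNPP => NQ; apply: E; by exists g.
  apply: (QA_P HP); apply: NNPP => NQ; apply: E'; by exists g.
move=> P1 P2 P3 H1 H2 H3.
case: (classic (exists g, P1 g /\ ~ QA g)) => E1;
case: (classic (exists g, P2 g /\ ~ QA g)) => E2;
case: (classic (exists g, P3 g /\ ~ QA g)) => E3.
- by left; apply: same.
- by left; apply: same.
- by right; left; apply: same.
- by right; right; apply: triv.
- by right; right; apply: same.
- by right; left; apply: triv.
- by left; apply: triv.
- by left; apply: triv.
Qed.

End Main.

Unset Implicit Arguments.

Theorem proposition1p3 (k : fieldType) (B : comAlgType k)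
  (brB : B -> B -> B) (alpha delta : B -> B)
  (brA : {poly B} -> {poly B} -> {poly B})
  (alphahat : {poly B} -> {poly B}) (s : k) :
  [pchar k] =i pred0 ->
  poisson_bracket (fun c : k => c%:A : B) brB ->
  poisson_derivation (fun c : k => c%:A : B) brB alpha ->
  kderivation (fun c : k => c%:A : B) delta ->
  (forall a b : B, delta (brB a b) =
     brB (delta a) b + brB a (delta b) + alpha a * delta b - delta a * alpha b) ->
  (* A = B[x; alpha, delta]_p : the Poisson bracket on B[x] extending that of B
     with {x, b} = alpha(b) x + delta(b) *)
  poisson_bracket (fun c : k => (c%:A : B)%:P) brA ->
  (forall a b : B, brA a%:P b%:P = (brB a b)%:P) ->
  (forall b : B, brA 'X b%:P = (alpha b)%:P * 'X + (delta b)%:P) ->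
  (* alphahat : a derivation of A extending alpha, with alphahat(x) = s x *)
  kderivation (fun c : k => (c%:A : B)%:P) alphahat ->
  (forall b : B, alphahat b%:P = (alpha b)%:P) ->
  s != 0 ->
  alphahat 'X = (s%:A : B)%:P * 'X ->
  forall Q : B -> Prop, prime_ideal Q -> poisson_ideal brB Q ->
  at_most_two (stable_poisson_prime_over brA alphahat Q).
Proof.
move=> Hc HbrB Hal _ _ HbrA HAC HAX Hah HahC Hs HahX Q HQ _.
exact: (main_thm Hc HbrB Hal HbrA HAC HAX Hah HahC Hs HahX HQ).
Qed.
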